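(* Let $G$ be a connected graph that is not a path, and let $B$ be (the vertex set of) a block of $G$ which is not a cut edge of a pendant path of $G$. Then every connected forcing set of $G$ contains at least $\delta(G[B])$ vertices of $B$.
   Context: Zero forcing: given a graph $G$ and a set $S$ of initially colored vertices, if a colored vertex $u$ has exactly one uncolored neighbor $v$, then $v$ becomes colored. $S$ is a zero forcing set if repeated application colors all vertices. A connected forcing set is a zero forcing set $S$ with $G[S]$ connected. A block is a maximal subgraph with no articulation point (cut vertex). A pendant path attached to a vertex $v$ is a set $P\subset V$ such that $G[P]$ is a path component of $G-v$, one of whose ends is adjacent to $v$ in $G$; a cut edge of a pendant path is an edge of the path $G[P\cup\{v\}]$ (a single-edge block lying on the pendant path together with the vertex it is attached to). $\delta(H)$ denotes the minimum degree of $H$. *)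

(* Defs.v *)
From mathcomp Require Import all_boot.
Set Implicit Arguments. Unset Strict Implicit. Unset Printing Implicit Defensive.

(* A simple graph on a finite vertex type T is given by a relation e
   (assumed symmetric and irreflexive in the theorem). Vertex subsets are
   {set T}; G[A] is the subgraph induced by A. *)
Section GraphDefs.
Variables (T : finType) (e : rel T).

Definition ind_rel (A : {set T}) : rel T :=
  fun x y => [&& e x y, x \in A & y \in A].

(* G[A] is connected (the empty graph counts as connected) *)
Definition connected_set (A : {set T}) : Prop :=
  forall x y, x \in A -> y \in A -> connect (ind_rel A) x y.

Definition force_step (S : {set T}) : {set T} :=
  S :|: [set v | [exists u, [&& u \in S, e u v &
                   [forall w, e u w ==> (w \in S) || (w == v)]]]].

Definition zf_closure (S : {set T}) : {set T} := iter #|T| force_step S.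

Definition zero_forcing_set (S : {set T}) : Prop := zf_closure S = setT.

Definition connected_forcing_set (S : {set T}) : Prop :=
  zero_forcing_set S /\ connected_set S.

Definition nonseparable (A : {set T}) : Prop :=
  A != set0 /\ connected_set A /\
  forall v, v \in A -> connected_set (A :\ v).

Definition block (B : {set T}) : Prop :=
  nonseparable B /\ forall A : {set T}, B \subset A -> nonseparable A -> A = B.

Definition deg_in (A : {set T}) (v : T) : nat := #|[set w in A | e v w]|.
Definition mindeg (A : {set T}) : nat := \big[minn/#|T|]_(v in A) deg_in A v.

Definition seq_adj (s : seq T) (x y : T) : Prop :=
  exists i, i.+1 < size s /\
    ((nth x s i = x /\ nth x s i.+1 = y) \/ (nth x s i = y /\ nth x s i.+1 = x)).

Definition path_enum (A : {set T}) (s : seq T) : Prop :=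
  uniq s /\ s != [::] /\ (forall x, (x \in A) = (x \in s)) /\
  forall x y, x \in A -> y \in A -> (e x y <-> seq_adj s x y).

Definition is_path_graph (A : {set T}) : Prop := exists s, path_enum A s.

(* P is a pendant path attached to v: G[P] is a path component of G - v,
   one of whose ends is adjacent to v *)
Definition pendant_path (v : T) (P : {set T}) : Prop :=
  v \notin P /\ connected_set P /\
  (forall x y, x \in P -> y \notin P -> y != v -> ~~ e x y) /\
  exists x s, path_enum P (x :: s) /\ (e v x || e v (last x s)).

Definition cut_edge_of_pendant_path (B : {set T}) : Prop :=
  exists v P x y, pendant_path v P /\ x != y /\ e x y /\
    x \in v |: P /\ y \in v |: P /\ B = [set x; y].

End GraphDefs.

(* Main.v *)
Require Import Defs.
From mathcomp Require Import all_boot.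
From Stdlib Require Import Classical.
From mathcomp Require Import zify.
Set Implicit Arguments. Unset Strict Implicit. Unset Printing Implicit Defensive.

Lemma bigmin_le_seq (T : eqType) (r : seq T) (P : pred T) (F : T -> nat) x0 v :
  v \in r -> P v -> \big[minn/x0]_(i <- r | P i) F i <= F v.
Proof.
elim: r => // a r IH; rewrite inE big_cons => /orP [/eqP -> | vr] Pv.
  by rewrite Pv geq_minl.
case: (P a); last exact: IH.
by rewrite geq_min IH ?orbT.
Qed.

Section Tools.
Variables (T : finType) (e : rel T).
Hypothesis e_sym : symmetric e.
Hypothesis e_irr : irreflexive e.
Implicit Types A X D : {set T}.

Lemma mindeg_le (B : {set T}) v : v \in B -> mindeg e B <= deg_in e B v.
Proof. move=> vB. by apply: bigmin_le_seq; rewrite ?mem_index_enum. Qed.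

Lemma ind_sym A : symmetric (ind_rel e A).
Proof. move=> x y; rewrite /ind_rel e_sym; by case: (x \in A); case: (y \in A); rewrite ?andbF. Qed.

Lemma conn_sym A x y : connect (ind_rel e A) x y = connect (ind_rel e A) y x.
Proof. by apply: sym_connect_sym; apply: ind_sym. Qed.

Lemma conn_edge A x y : x \in A -> y \in A -> e x y -> connect (ind_rel e A) x y.
Proof. move=> xA yA exy; apply: connect1; by rewrite /ind_rel exy xA yA. Qed.

Lemma conn_mono A A' x y : A \subset A' -> connect (ind_rel e A) x y -> connect (ind_rel e A') x y.
Proof.
move=> sAA'; apply: connect_sub => a b; rewrite /ind_rel => /and3P [eab aA bA].
apply: connect1; by rewrite /ind_rel eab (subsetP sAA' _ aA) (subsetP sAA' _ bA).
Qed.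

Lemma conn_closure A x y (Q : T -> Prop) : connect (ind_rel e A) x y -> Q x ->
  (forall a b, a \in A -> b \in A -> e a b -> Q a -> Q b) -> Q y.
Proof.
move=> /connectP [p pth ->] Qx step.
elim: p x pth Qx => // a p IH x /= /andP [/and3P [exa xA aA] pth] Qx.
apply: IH => //; exact: step Qx.
Qed.

Lemma conn_in A x y : connect (ind_rel e A) x y -> x \in A -> y \in A.
Proof. move=> c xA; apply: (conn_closure (Q := fun t => t \in A) c) => //. Qed.

Lemma cross A X x y : connect (ind_rel e A) x y -> x \in X -> y \notin X ->
  exists a b, [/\ a \in A, b \in A, a \in X, b \notin X & e a b].
Proof.
move=> c xX yX; apply: NNPP => nE; move/negP: yX; apply.
apply: (conn_closure (Q := fun t => t \in X) c) => // a b aA bA eab aX.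
case: (boolP (b \in X)) => // bX; exfalso; apply: nE; by exists a, b.
Qed.

Lemma hub_conn A h : h \in A -> (forall y, y \in A -> connect (ind_rel e A) h y) -> connected_set e A.
Proof. move=> hA H x y xA yA; apply: (connect_trans (y := h)); first by rewrite conn_sym; apply: H. exact: H. Qed.

Lemma comp_conn A x : x \in A -> connected_set e [set y | connect (ind_rel e A) x y].
Proof.
move=> xA; set D := [set y | _]; have xD : x \in D by rewrite inE connect0.
apply: (hub_conn xD) => y; rewrite inE => c.
apply: (conn_closure (Q := fun t => connect (ind_rel e D) x t) c).
  exact: connect0.
move=> a b aA bA eab ca.
have sDA : D \subset A by apply/subsetP => t; rewrite inE => /conn_in; apply.
have aD : a \in D by rewrite inE; apply: (conn_mono sDA ca).
have bD : b \in D by rewrite inE; apply: (connect_trans (y := a)); [move: aD; rewrite inE | exact: conn_edge].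
apply: (connect_trans ca); exact: conn_edge.
Qed.

End Tools.

Section BL.
Variables (T : finType) (e : rel T).
Hypothesis e_sym : symmetric e.
Hypothesis e_irr : irreflexive e.
Implicit Types A X D K B : {set T}.

Definition bprops B K := [/\ (forall x, x \in K -> x \notin B), connected_set e K &
  exists k1 k2 a1 a2, [/\ k1 \in K, k2 \in K, a1 \in B, a2 \in B & [/\ a1 != a2, e k1 a1 & e k2 a2]]].

Lemma BL_step B K : nonseparable e B -> bprops B K ->
  (forall K', bprops B K' -> #|K'| < #|K| -> False) -> nonseparable e (B :|: K).
Proof.
move=> [Bn0 [Bc Bsep]] [dKB Kc [k1 [k2 [a1 [a2 [k1K k2K a1B a2B [a12 ek1 ek2]]]]]]] small.
have sBU : B \subset B :|: K by apply/subsetP => t tB; rewrite inE tB.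
have sKU : K \subset B :|: K by apply/subsetP => t tK; rewrite inE tK orbT.
split; first by apply/set0Pn; exists a1; rewrite inE a1B.
split.
  have a1U : a1 \in B :|: K by rewrite inE a1B.
  apply: (hub_conn e_sym a1U) => y; rewrite inE => /orP [yB | yK].
    exact: (conn_mono (sBU) (Bc _ _ a1B yB)).
  apply: (connect_trans (y := k1)); last first.
    exact: (conn_mono sKU (Kc _ _ k1K yK)).
  apply: conn_edge; rewrite ?inE ?a1B ?k1K ?orbT //. by rewrite e_sym.
move=> v; rewrite inE => /orP [vB | vK].
  set a := if a1 == v then a2 else a1.
  set k := if a1 == v then k2 else k1.
  have aB : a \in B by rewrite /a; case: (a1 == v).
  have kK : k \in K by rewrite /k; case: (a1 == v).
  have av : a != v by rewrite /a; case: (eqVneq a1 v) => [<- | //]; rewrite eq_sym.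
  have eka : e k a by rewrite /a /k; case: (a1 == v).
  have vnK : v \notin K by apply/negP => /dKB; rewrite vB.
  have aA : a \in (B :|: K) :\ v by rewrite !inE av aB.
  apply: (hub_conn e_sym aA) => y; rewrite !inE => /andP [yv /orP [yB | yK]].
    apply: (conn_mono _ (Bsep v vB _ _ _ _)); last by rewrite !inE yv yB.
      by apply/subsetP => t; rewrite !inE => /andP [-> ->].
    by rewrite !inE av aB.
  have sKA : K \subset (B :|: K) :\ v.
    apply/subsetP => t tK; rewrite !inE tK orbT andbT; apply/negP => /eqP tv.
    by move: vnK; rewrite -tv tK.
  apply: (connect_trans (y := k)).
    apply: conn_edge => //; [by apply: (subsetP sKA) | by rewrite e_sym].
  exact: (conn_mono sKA (Kc _ _ kK yK)).
have vnB : v \notin B by apply: dKB.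
set A' := (B :|: K) :\ v.
have sBA : B \subset A'.
  apply/subsetP => t tB; rewrite !inE tB andbT; apply/negP => /eqP tv.
  by move: vnB; rewrite -tv tB.
have a1A : a1 \in A' by apply: (subsetP sBA).
case: (boolP [forall y, (y \in A') ==> connect (ind_rel e A') a1 y]) => [/forallP H | /forallPn [x]].
  apply: (hub_conn e_sym a1A) => y yA; by move: (H y); rewrite yA.
rewrite negb_imply => /andP [xA nc].
set Y := [set y | connect (ind_rel e A') x y].
have F : forall z, connect (ind_rel e A') a1 z -> z \notin Y.
  move=> z c; apply/negP; rewrite inE => c'; move/negP: nc; apply.
  apply: (connect_trans c); by rewrite conn_sym.
have YA : forall y, y \in Y -> y \in A' by move=> y; rewrite inE => /conn_in; apply.
have vY : v \notin Y by apply/negP => /YA; rewrite !inE eqxx.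
have YB : forall y, y \in B -> y \notin Y.
  move=> y yB; apply: F; exact: (conn_mono sBA (Bc _ _ a1B yB)).
have xY : x \in Y by rewrite inE connect0.
have xK : x \in K by move: (YA _ xY); rewrite !inE => /andP [_ /orP [xB|//]]; move: (YB _ xB); rewrite xY.
set K' := K :\: Y.
have vK' : v \in K' by rewrite in_setD vY vK.
exfalso; apply: (small K').
  split.
  - by move=> t; rewrite !inE => /andP [_ /dKB].
  - apply: (hub_conn e_sym vK') => z; rewrite in_setD => /andP [zY zK].
    have := Kc _ _ vK zK.
    move=> c; have : (z \in Y) || connect (ind_rel e K') v z; last by rewrite (negbTE zY).
    apply: (conn_closure (Q := fun t => (t \in Y) || connect (ind_rel e K') v t) c).
      by rewrite connect0 orbT.
    move=> a b aK bK eab /orP [aY | ca].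
      case: (boolP (b \in Y)) => // bY.
      case: (eqVneq b v) => [-> | bv]; first by rewrite connect0 orbT.
      have bA : b \in A' by rewrite !inE bv bK orbT.
      have aA := YA _ aY.
      move: aY; rewrite inE => ca; exfalso; move/negP: bY; apply; rewrite inE.
      apply: (connect_trans ca); exact: conn_edge.
    case: (boolP (b \in Y)) => //= bY.
    have aK' : a \in K' by apply: (conn_in ca).
    apply: (connect_trans ca); apply: conn_edge => //; by rewrite in_setD bY bK.
  - have kin : forall k a, k \in K -> a \in B -> e k a -> k \in K'.
      move=> k a kK aB eka; rewrite in_setD kK andbT.
      case: (eqVneq k v) => [-> // | kv].
      apply: F; apply: (connect_trans (y := a)); first exact: (conn_mono sBA (Bc _ _ a1B aB)).
      apply: conn_edge; [exact: (subsetP sBA) | by rewrite !inE kv kK orbT | by rewrite e_sym].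
    exists k1, k2, a1, a2; split => //; [exact: (kin _ a1) | exact: (kin _ a2)].
have : #|K :&: Y| > 0 by apply/card_gt0P; exists x; rewrite inE xK xY.
by rewrite -(cardsID Y K) -addn1 => H; rewrite -[ltnLHS]add0n ltn_add2r.
Qed.

Lemma BL B K : block e B -> bprops B K -> False.
Proof.
move=> [Bns Bmax]; move: {2}#|K| (leqnn #|K|) => n; elim: n K => [|n IH] K Kn HK.
  case: HK => _ _ [k1 [_ [_ [_ [k1K _ _ _ _]]]]].
  by move: Kn; rewrite leqn0 => /eqP/cards0_eq K0; rewrite K0 inE in k1K.
have ns : nonseparable e (B :|: K).
  apply: BL_step => // K' HK' lt; apply: (IH K') => //; exact: leq_trans lt Kn.
have := Bmax _ (subsetUl B K) ns.
case: HK => dKB _ [k1 [_ [_ [_ [k1K _ _ _ _]]]]] E.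
have : k1 \in B by rewrite -E inE k1K orbT.
by rewrite (negbTE (dKB _ k1K)).
Qed.

End BL.

Section Force.
Variables (T : finType) (e : rel T).
Hypothesis e_sym : symmetric e.
Hypothesis e_irr : irreflexive e.
Implicit Types A X D K B U : {set T}.
Variable S : {set T}.

Definition C i := iter i (force_step e) S.

Lemma C0 : C 0 = S. Proof. by []. Qed.
Lemma CS i : C i.+1 = force_step e (C i). Proof. by []. Qed.

Lemma force_sub X : X \subset force_step e X.
Proof. by apply/subsetP => t tX; rewrite /force_step inE tX. Qed.

Lemma C_mono i k : i <= k -> C i \subset C k.
Proof.
move=> /subnKC <-; elim: (k - i) => [|n IH]; first by rewrite addn0.
rewrite addnS CS; exact: subset_trans IH (force_sub _).
Qed.

Lemma force_dec X z : z \in force_step e X -> z \notin X ->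
  exists u, [/\ u \in X, e u z & forall w, e u w -> (w \in X) || (w == z)].
Proof.
rewrite /force_step !inE => /orP [-> //|/existsP [u /and3P [uX euz /forallP H]]] _.
exists u; split => // w euw; by move: (H w); rewrite euw.
Qed.

Lemma noentry_step U w k : (forall x y, x \in U -> y \notin U -> e x y -> y = w) ->
  (forall x, x \in U -> x \notin C k) -> w \notin C k -> forall x, x \in U -> x \notin C k.+1.
Proof.
move=> bd H wC x xU; apply/negP; rewrite CS => xC.
have [u [uC eux _]] := force_dec xC (H _ xU).
case: (boolP (u \in U)) => uU; first by move: (H _ uU); rewrite uC.
have uw : u = w by apply: (bd _ _ xU uU); rewrite e_sym.
by move: wC; rewrite -uw uC.
Qed.

Lemma noentry U w : (forall x, x \in S -> x \notin U) ->
  (forall x y, x \in U -> y \notin U -> e x y -> y = w) ->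
  forall k, w \notin C k -> forall x, x \in U -> x \notin C k.
Proof.
move=> SU bd; elim => [|k IH] wC.
  move=> x xU; rewrite C0; apply/negP => xS; by move: (SU _ xS); rewrite xU.
have wk : w \notin C k.
  apply/negP => wk; move/negP: wC; apply; exact: (subsetP (C_mono (leqnSn k))).
apply: (noentry_step bd (IH wk) wk).
Qed.

Definition Ycomp w u := [set y | connect (ind_rel e (~: [set w])) u y].

Lemma Y_notw w u : u != w -> w \notin Ycomp w u.
Proof.
move=> uw; apply/negP; rewrite inE => c.
by move: (conn_in c); rewrite !inE eqxx uw; move/(_ isT).
Qed.

Lemma Y_bound w u : u != w -> forall x y, x \in Ycomp w u -> y \notin Ycomp w u -> e x y -> y = w.
Proof.
move=> uw x y xY yY exy; apply/eqP; apply: contraNT yY => yw.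
move: (xY); rewrite !inE => c; apply: (connect_trans c); apply: conn_edge => //.
  rewrite !inE; apply/negP => /eqP xw; by rewrite xw (negbTE (Y_notw uw)) in xY.
by rewrite !inE.
Qed.

Lemma Y_B B w u : block e B -> w \in B -> u \notin B -> e u w ->
  forall y, y \in Ycomp w u -> y \notin B.
Proof.
move=> HB wB uB euw b; rewrite inE => cb; apply/negP => bB.
have uw : u != w by apply/negP => /eqP uw; move: uB; rewrite uw wB.
set K := [set y | connect (ind_rel e (~: B)) u y].
have uK : u \in K by rewrite inE connect0.
have KB : forall x, x \in K -> x \notin B.
  move=> x; rewrite inE => c; by move: (conn_in c); rewrite !inE (negbTE uB) /=; move/(_ isT).
have bK : b \notin K by apply/negP => /KB; rewrite bB.
have [a [a' [aA a'A aK a'K eaa']]] := cross cb uK bK.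
have a'B : a' \in B.
  apply: contraNT a'K => a'B; move: (aK); rewrite !inE => ca; apply: (connect_trans ca).
  apply: conn_edge => //; rewrite ?inE ?a'B //; exact: KB.
apply: (BL e_sym HB (K := K)); split => //.
  apply: comp_conn => //; by rewrite inE.
exists u, a, w, a'; split => //; split => //.
by move: a'A; rewrite !inE eq_sym.
Qed.

Lemma Y_S w u j : u \in C j -> w \notin C j -> u != w -> exists s, s \in S /\ s \in Ycomp w u.
Proof.
move=> uC wC uw; apply: NNPP => nE.
have SY : forall x, x \in S -> x \notin Ycomp w u.
  move=> x xS; apply/negP => xY; apply: nE; by exists x.
have uY : u \in Ycomp w u by rewrite inE connect0.
by move: (noentry SY (Y_bound uw) wC uY); rewrite uC.
Qed.

Lemma Y_Sconn w u s s' : u != w -> connected_set e S -> s \in S -> s \in Ycomp w u ->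
  s' \in S -> s' \notin Ycomp w u -> w \in S.
Proof.
move=> uw Sc sS sY s'S s'Y.
have [a [b [aS bS aY bY eab]]] := cross (Sc _ _ sS s'S) sY s'Y.
by rewrite -(Y_bound uw aY bY eab).
Qed.


End Force.

Section Main.
Variables (T : finType) (e : rel T).
Hypothesis e_sym : symmetric e.
Hypothesis e_irr : irreflexive e.
Variable S : {set T}.
Notation C := (C e S).

Lemma caseA B : block e B -> connected_set e S -> C #|T| = setT ->
  (exists b0, b0 \in S /\ b0 \in B) -> mindeg e B <= #|S :&: B|.
Proof.
move=> HB Sc Hall [b0 [b0S b0B]].
case: (boolP (B \subset S)) => [sBS | /subsetPn [x xB xS]].
  rewrite (setIidPr sBS); apply: (leq_trans (mindeg_le _ b0B)).
  by apply: subset_leq_card; apply/subsetP => t; rewrite inE => /andP [].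
have exP : exists j, [exists x, [&& x \in B, x \notin S & x \in C j]].
  by exists #|T|; apply/existsP; exists x; rewrite xB xS Hall inE.
have [j Pj minj] := ex_minnP exP; case/existsP: Pj => w /and3P [wB wS wC].
case: j wC minj => [|j'] wC minj; first by move: wC; rewrite C0 (negbTE wS).
have nP : forall y, y \in B -> y \in C j' -> y \in S.
  move=> y yB yC; apply: contraT => yS.
  have : j'.+1 <= j' by apply: minj; apply/existsP; exists y; rewrite yB yS yC.
  by rewrite ltnn.
have wCj : w \notin C j' by apply: contraNN wS; apply: nP.
have [u [uC euw Hu]] := force_dec (wC : w \in force_step e (C j')) wCj.
case: (boolP (u \in B)) => uB.
  have uS := nP _ uB uC.
  set N := [set t in B | e u t].
  have wN : w \in N by rewrite inE wB euw.
  have uN : u \notin N by rewrite inE e_irr andbF.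
  have sub : u |: (N :\ w) \subset S :&: B.
    apply/subsetP => t; rewrite !inE => /orP [/eqP -> | /and3P [tw tB eut]]; first by rewrite uS uB.
    rewrite tB andbT; apply: nP => //; move: (Hu _ eut); by rewrite (negbTE tw) orbF.
  apply: (leq_trans (mindeg_le _ uB)); apply: (leq_trans _ (subset_leq_card sub)).
  rewrite /deg_in -/N cardsU1 (cardsD1 w N) wN.
  have -> : u \notin N :\ w by rewrite inE negb_and uN orbT.
  by [].
have uw : u != w by apply: contraNneq uB => ->.
have [s [sS sY]] := Y_S e_sym uC wCj uw.
have b0Y : b0 \notin Ycomp e w u.
  by apply/negP => /(Y_B e_sym HB wB uB euw); rewrite b0B.
by move: wS; rewrite (Y_Sconn uw Sc sS sY b0S b0Y).
Qed.

End Main.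

Section Final.
Variables (T : finType) (e : rel T).
Hypothesis e_sym : symmetric e.
Hypothesis e_irr : irreflexive e.
Implicit Types A W B R : {set T}.

Lemma path_ind R x p : path e x p -> (forall y, y \in x :: p -> y \in R) -> path (ind_rel e R) x p.
Proof.
elim: p x => // a p IH x /= /andP [exa pth] H.
rewrite /ind_rel exa H ?inE ?eqxx // H ?inE ?eqxx ?orbT //=.
apply: IH => // y yin; apply: H; by rewrite inE yin orbT.
Qed.

Lemma final_struct W B w x1 rest v :
  let s := w :: x1 :: rest in
  uniq s -> path e w (x1 :: rest) -> (forall z, (z \in W) = (z \in s)) ->
  (forall i z, i.+1 < size s -> z \in W -> e (nth w s i) z -> index z s <= i.+1) ->
  (forall x y, x \in W :\ w -> y \notin W :\ w -> e x y -> y = w) ->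
  block e B -> w \in B -> v \in B -> v != w -> B \subset W ->
  cut_edge_of_pendant_path e B.
Proof.
move=> s us pth memW I4 bdR HB wB vB vw sBW.
set t := x1 :: rest.
set R := W :\ w.
have wt : w \notin t by move: us; rewrite /s cons_uniq => /andP [].
have ut : uniq t by move: us; rewrite /s cons_uniq => /andP [].
have memR : forall z, (z \in R) = (z \in t).
  move=> z; rewrite in_setD1 memW /s in_cons; case: (eqVneq z w) => [-> | zw] /=; by rewrite ?(negbTE wt).
have nbw : forall z, z \in W -> e w z -> z = x1.
  move=> z zW ewz; have := I4 0 z isT zW ewz; rewrite /s /=.
  case: (eqVneq w z) => [wz | _]; first by rewrite wz e_irr in ewz.
  by case: (eqVneq x1 z).
have ex1 : e w x1 by move: pth => /= /andP [].
have pth1 : path e x1 rest by move: pth => /= /andP [].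
have sB : B \subset [set w; x1].
  apply/subsetP => b bB; rewrite !inE; apply/negPn/negP; rewrite negb_or => /andP [bw bx1].
  have Bc : connected_set e (B :\ x1).
    case: (boolP (x1 \in B)) => x1B; first by case: HB => [[_ [_ H]] _]; apply: H.
    have -> : B :\ x1 = B.
      apply/setP => z; rewrite in_setD1; case: (eqVneq z x1) => [-> |] /=; by rewrite ?(negbTE x1B).
    by case: HB => [[_ [H _]] _].
  have wB' : w \in B :\ x1.
    rewrite in_setD1 wB andbT; apply/negP => /eqP xw; move: wt; by rewrite xw /t in_cons eqxx.
  have bB' : b \in B :\ x1 by rewrite !inE bB bx1.
  have wX : w \in [set w] by rewrite inE.
  have bX : b \notin [set w] by rewrite inE.
  have [a [a' [aA a'A aX a'X eaa']]] := cross (Bc _ _ wB' bB') wX bX.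
  move: aX; rewrite inE => /eqP aw; rewrite aw in eaa'.
  have a'W : a' \in W by apply: (subsetP sBW); move: a'A; rewrite inE => /andP [].
  by move: a'A; rewrite (nbw _ a'W eaa') !inE eqxx.
have vx1 : v = x1 by move: (subsetP sB _ vB); rewrite !inE (negbTE vw) => /eqP.
have EB : B = [set w; x1].
  apply/eqP; rewrite eqEsubset sB /=; apply/subsetP => z; rewrite !inE => /orP [] /eqP ->;
  by rewrite -?vx1.
have x1R : x1 \in R by rewrite memR inE eqxx.
exists w, R, w, x1; split.
- split; first by rewrite !inE eqxx.
  split.
    apply: (hub_conn e_sym x1R) => y; rewrite memR => yt.
    apply: (path_connect (path_ind pth1 _)) => // z zt; by rewrite memR.
  split.
    move=> x y xR yR yw; apply/negP => exy; move: (bdR _ _ xR yR exy); by move/eqP: yw.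
  exists x1, rest; split; last by rewrite ex1.
  split => //; split => //; split; first by move=> z; rewrite memR.
  move=> x y xR yR; rewrite memR in xR; rewrite memR in yR.
  split => [exy | [i [ilt [[nx ny] | [ny nx]]]]].
  + set ix := index x t; set iy := index y t.
    have ixt : ix < size t by rewrite index_mem.
    have iyt : iy < size t by rewrite index_mem.
    have xW : x \in W by rewrite memW /s inE xR orbT.
    have yW : y \in W by rewrite memW /s inE yR orbT.
    have idx : forall z, z \in t -> index z s = (index z t).+1.
      move=> z zt; rewrite /s /=; case: (eqVneq w z) => // wz; by rewrite wz zt in wt.
    have le : forall a b, a \in t -> b \in t -> a \in W -> b \in W -> e a b -> index b t <= (index a t).+1.
      move=> a b at' bt aW bW eab.
      case: (ltnP (index a t).+1 (size t)) => H.
        have := I4 (index a t).+1 b _ bW; rewrite idx //= (nth_index w at').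
        by move/(_ H eab).
      apply: leq_trans H; apply: ltnW; by rewrite index_mem.
    have l1 := le _ _ xR yR xW yW exy.
    have l2 := le _ _ yR xR yW xW (etrans (e_sym y x) exy).
    have nxy : ix != iy.
      apply/eqP => E; have : x = y by rewrite -(nth_index x xR) -(nth_index x yR) -/ix -/iy E.
      move=> xy; by rewrite xy e_irr in exy.
    case: (ltngtP ix iy) => [lt | gt | E]; last by rewrite E eqxx in nxy.
    * have E : iy = ix.+1 by apply/eqP; rewrite eqn_leq l1 lt.
      exists ix; split; first by rewrite -E.
      left; split; [exact: nth_index | by rewrite -E nth_index].
    * have E : ix = iy.+1 by apply/eqP; rewrite eqn_leq l2 gt.
      exists iy; split; first by rewrite -E.
      right; split; [exact: nth_index | by rewrite -E nth_index].
  + move: ilt; rewrite /= ltnS => ilt.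
    have Hp : e (nth x t i) (nth x t i.+1) := (pathP x pth1) i ilt.
    by rewrite nx ny in Hp.
  + move: ilt; rewrite /= ltnS => ilt.
    have Hp : e (nth x t i) (nth x t i.+1) := (pathP x pth1) i ilt.
    by rewrite nx ny e_sym in Hp.
- split.
    apply/eqP => E; move: wt; by rewrite E /t in_cons eqxx.
  split => //; split; first by rewrite setU11.
  split; last exact: EB.
  by rewrite in_setU1 x1R orbT.
Qed.

End Final.

Section Inv.
Variables (T : finType) (e : rel T).
Hypothesis e_sym : symmetric e.
Hypothesis e_irr : irreflexive e.
Variable S : {set T}.
Notation C := (C e S).
Implicit Types W : {set T}.

Definition Inv W w k t := [/\ uniq (w :: t), path e w t,
  (forall z, z \in W -> (z \in C k) = (z \in w :: t)),
  (forall z, z \in w :: t -> z \in W) &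
  (forall i z, i.+1 < size (w::t) -> z \in W -> e (nth w (w::t) i) z -> index z (w::t) <= i.+1)].

Lemma inv_step W w k t : (forall x y, x \notin W -> y \in W -> e x y -> y = w) ->
  w \in C k -> Inv W w k t -> exists t', Inv W w k.+1 t'.
Proof.
move=> bd wC [us pth memb sub I4].
set s := w :: t.
have H : forall z, z \in W -> z \in C k.+1 -> z \notin C k ->
    e (last w t) z /\ (forall x, e (last w t) x -> (x \in C k) || (x == z)).
  move=> z zW zC zk.
  have [y [yC eyz Hy]] := force_dec (zC : z \in force_step e (C k)) zk.
  have yW : y \in W.
    apply: contraT => yW; move: (bd _ _ yW zW eyz) => zw; by rewrite zw wC in zk.
  have ys : y \in s by rewrite -memb.
  have yl : y = last w t.
    case: (ltnP (index y s).+1 (size s)) => lt.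
      have := I4 _ _ lt zW; rewrite nth_index // => /(_ eyz) le.
      have zs : z \in s by rewrite -index_mem; exact: leq_ltn_trans le lt.
      by rewrite memb // zs in zk.
    have iy : index y s = (size s).-1.
      have h : index y s < size s by rewrite index_mem.
      lia.
    by rewrite -(nth_index w ys) iy nth_last.
  by rewrite -yl; split.
case: (classic (exists z, [/\ z \in W, z \in C k.+1 & z \notin C k])) => [[z [zW zC zk]] | nE].
  have [elz Hl] := H z zW zC zk.
  have zs : z \notin s by rewrite -memb.
  exists (rcons t z); split.
  - by rewrite -rcons_cons rcons_uniq zs us.
  - by rewrite rcons_path pth elz.
  - move=> z' z'W; rewrite -rcons_cons mem_rcons in_cons.
    case: (boolP (z' \in C k)) => z'k.
      have -> : z' \in C k.+1 by apply: (subsetP (C_mono _ _ (leqnSn k))).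
      by rewrite -memb // z'k orbT.
    case: (boolP (z' \in C k.+1)) => z'C.
      have [elz' _] := H z' z'W z'C z'k.
      by move: (Hl _ elz'); rewrite (negbTE z'k) /= => ->.
    apply/esym/negbTE; rewrite negb_or -memb // z'k andbT.
    by apply: contraNneq z'C => ->.
  - move=> x; rewrite -rcons_cons mem_rcons in_cons => /orP [/eqP -> // | ]; exact: sub.
  - move=> i z' ilt z'W; rewrite -rcons_cons nth_rcons.
    case: (ltnP i (size s)) => [iS | si]; last first.
      exfalso; move: ilt si; rewrite /s /= size_rcons; lia.
    case: (ltnP i.+1 (size s)) => [i1s | si1].
      move=> ez'; have le := I4 _ _ i1s z'W ez'.
      have z's : z' \in s by rewrite -index_mem; exact: leq_ltn_trans le i1s.
      by rewrite -cats1 index_cat z's.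
    have ie : i = (size s).-1 by lia.
    rewrite ie nth_last /= => ez'.
    have : z' \in rcons s z.
      rewrite mem_rcons in_cons; move: (Hl _ ez') => /orP [z'k | ->] //.
      by rewrite -memb // z'k orbT.
    rewrite -index_mem size_rcons ltnS => h; move: h; rewrite /s /=; lia.
exists t; split => // z zW; rewrite -memb //.
case: (boolP (z \in C k)) => zk; first by apply: (subsetP (C_mono _ _ (leqnSn k))).
apply/negbTE; apply/negP => zC; apply: nE; by exists z.
Qed.

End Inv.

Section CaseB.
Variables (T : finType) (e : rel T).
Hypothesis e_sym : symmetric e.
Hypothesis e_irr : irreflexive e.
Variable S : {set T}.
Notation C := (C e S).

Lemma caseB B : block e B -> connected_set e S -> C #|T| = setT ->
  ~ cut_edge_of_pendant_path e B -> (forall x, x \in S -> x \notin B) -> mindeg e B = 0.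
Proof.
move=> HB Sc Hall HBnot SB.
case: (posnP (mindeg e B)) => // mpos; exfalso.
have [b bB] : exists b, b \in B by case: HB => [[/set0Pn [b bB] _] _]; exists b.
have exP : exists j, [exists x, (x \in B) && (x \in C j)].
  by exists #|T|; apply/existsP; exists b; rewrite bB Hall inE.
have [j Pj minj] := ex_minnP exP; case/existsP: Pj => w /andP [wB wC].
case: j wC minj => [|j'] wC minj.
  by move: (SB _ (wC : w \in S)); rewrite wB.
have nP : forall y, y \in B -> y \notin C j'.
  move=> y yB; apply/negP => yC.
  have : j'.+1 <= j' by apply: minj; apply/existsP; exists y; rewrite yB yC.
  by rewrite ltnn.
have wCj := nP _ wB.
have [u [uC euw Hu]] := force_dec (wC : w \in force_step e (C j')) wCj.
have uB : u \notin B by apply: contraNN (nP u) _; rewrite uC.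
have uw : u != w by apply: contraNneq uB => ->.
set Y := Ycomp e w u.
have YB := Y_B e_sym HB wB uB euw.
have [s0 [s0S s0Y]] := Y_S e_sym uC wCj uw.
have wS : w \notin S.
  apply: contraNN wCj => wS; exact: (subsetP (C_mono e S (leq0n j'))).
have SY : forall x, x \in S -> x \in Y.
  move=> x xS; apply: contraT => xY; by rewrite (Y_Sconn uw Sc s0S s0Y xS xY) in wS.
set W := ~: Y.
set R := W :\ w.
have wW : w \in W by rewrite inE; exact: Y_notw.
have bdY : forall x y, x \notin W -> y \in W -> e x y -> y = w.
  move=> x y; rewrite !in_setC negbK => xY yY exy; exact: (Y_bound uw xY yY exy).
have bdR : forall x y, x \in R -> y \notin R -> e x y -> y = w.
  move=> x y xR yR exy; case: (eqVneq y w) => // yw; exfalso.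
  have yW : y \notin W by move: yR; rewrite in_setD1 yw.
  have xW : x \in W by move: xR; rewrite in_setD1 => /andP [].
  have xw := bdY _ _ yW xW (etrans (e_sym y x) exy).
  by move: xR; rewrite xw in_setD1 eqxx.
have SR : forall x, x \in S -> x \notin R.
  move=> x xS; rewrite in_setD1 inE (SY _ xS) /=; by rewrite andbF.
have R0 := noentry_step e_sym bdR (noentry e_sym SR bdR wCj) wCj.
have loop : forall n, exists t, Inv e S W w (j'.+1 + n) t.
  elim => [|n [t IH]].
    exists [::]; split => //.
    - move=> z zW; rewrite addn0 in_cons in_nil orbF.
      case: (eqVneq z w) => [-> // | zw].
      by apply/negbTE; apply: R0; rewrite in_setD1 zw.
    - by move=> z; rewrite in_cons in_nil orbF => /eqP ->.
  rewrite addnS; apply: (inv_step bdY _ IH).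
  apply: (subsetP (C_mono e S (leq_addr n j'.+1))); exact: wC.
have jT : j'.+1 <= #|T| by apply: minj; apply/existsP; exists b; rewrite bB Hall inE.
have [t [us pth memb sub I4]] := loop (#|T| - j'.+1).
rewrite subnKC // in memb.
have memW : forall z, (z \in W) = (z \in w :: t).
  move=> z; apply/idP/idP => [zW | /sub //]; by rewrite -memb // Hall inE.
have [v vN] : exists v, v \in [set x in B | e w x].
  apply/card_gt0P; exact: leq_trans mpos (mindeg_le e wB).
move: vN; rewrite inE => /andP [vB ewv].
have vw : v != w by apply: contraTneq ewv => ->; rewrite e_irr.
have sBW : B \subset W.
  apply/subsetP => x xB; rewrite inE; apply/negP => /YB; by rewrite xB.
have vt : v \in w :: t by rewrite -memW (subsetP sBW).
case: t us pth memb sub I4 memW vt => [|x1 rest] us pth memb sub I4 memW vt.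
  by move: vt; rewrite in_cons in_nil orbF (negbTE vw).
apply: HBnot; exact: (final_struct e_sym e_irr us pth memW I4 bdR HB wB vB vw sBW).
Qed.

End CaseB.

Theorem proposition3 (T : finType) (e : rel T)
  (e_sym : symmetric e) (e_irr : irreflexive e)
  (G_conn : connected_set e setT) (G_not_path : ~ is_path_graph e setT)
  (B : {set T}) (HB : block e B) (HBnot : ~ cut_edge_of_pendant_path e B)
  (S : {set T}) (HS : connected_forcing_set e S) :
  mindeg e B <= #|S :&: B|.
Proof.
case: HS => Hzf Sc.
have Hall : C e S #|T| = setT by exact: Hzf.
case: (classic (exists b0, b0 \in S /\ b0 \in B)) => [H | nH].
  exact: (caseA e_sym e_irr HB Sc Hall H).
have SB : forall x, x \in S -> x \notin B.
  move=> x xS; apply/negP => xB; apply: nH; by exists x.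
by rewrite (caseB e_sym e_irr HB Sc Hall HBnot SB).
Qed.
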